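(* Let $\varepsilon\in[0,1)$ and $\mathcal{P},\mathcal{E}\subseteq\mathcal{D}(P)$. Then $$\beta\overline{C}_{\mathrm{GPO},\varepsilon}(\mathcal{P},\mathcal{E})=D^{\mathcal{E}}_{\max,\varepsilon}(\mathcal{P}\|\mathcal{E}).$$
   Context: All Hilbert spaces are finite-dimensional; $\mathcal{D}(P)$ is the set of density operators on $P$; $T(X,Y)=\tfrac12\|X-Y\|_1$; $\mathcal{B}_\varepsilon(\mathcal{P})=\{\omega\in\mathcal{D}:T(\omega,\rho)\le\varepsilon\text{ for some }\rho\in\mathcal{P}\}$. Battery: qubit $B$ with basis $\{|0\rangle,|1\rangle\}$, $\pi_M=(1-\tfrac1M)|0\rangle\langle0|+\tfrac1M|1\rangle\langle1|$ for $M>1$, $\Pi_M=\{\pi_{M'}:M'\in[M,\infty)\}$. The one-shot work cost from a dirty battery under a class $\mathfrak{F}$ is $\beta\overline{C}_{\mathfrak{F},\varepsilon}(\mathcal{P},\mathcal{E})=\log\inf\{M>1:\exists\mathcal{F}\in\mathfrak{F}\text{ with } T(\mathcal{F}(|1\rangle\langle1|),\rho)\le\varepsilon\text{ for some }\rho\in\mathcal{P}\text{ and }\mathcal{F}(\sigma)\in\mathcal{E}\ \forall\sigma\in\Pi_M\}$; GPO here means the class of CPTP maps from $B$ to $P$, Gibbs preservation being the condition $\mathcal{F}(\Pi_M)\subseteq\mathcal{E}$. For $\mathcal{K}\subseteq\mathcal{D}$, with $\operatorname{cl}(\mathcal{K})$ its closure and $\mathcal{C}(\gamma,\omega,1/M)=\{(1-\lambda)\gamma+\lambda\omega:\lambda\in(0,1/M]\}$,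 the subspace-constrained max-relative entropy is $D^{\mathcal{K}}_{\max,\varepsilon}(\mathcal{P}\|\mathcal{E})=\log\inf\{M>1:\gamma\in\operatorname{cl}(\mathcal{K}),\ \omega\in\mathcal{B}_\varepsilon(\mathcal{P}),\ \mathcal{C}(\gamma,\omega,1/M)\subseteq\mathcal{E}\}$ (with $\log\inf\emptyset=+\infty$). *)

(* Defs.v *)
From mathcomp Require Import all_boot all_order all_algebra.
From mathcomp Require Import complex.
From mathcomp Require Import all_classical all_reals all_analysis.

Set Implicit Arguments.
Unset Strict Implicit.
Unset Printing Implicit Defensive.

Import Order.TTheory GRing.Theory Num.Theory.
Local Open Scope ring_scope.
Local Open Scope classical_set_scope.
Local Open Scope sesquilinear_scope.

Definition rc {R : realType} (x : R) : R[i] := Complex x 0.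

Definition adjm {R : realType} {m n : nat} (A : 'M[R[i]]_(m, n)) : 'M[R[i]]_(n, m) :=
  A ^t*.

Definition psd {R : realType} {m : nat} (A : 'M[R[i]]_m) : Prop :=
  adjm A = A /\ forall v : 'cV[R[i]]_m, 0 <= (adjm v *m A *m v) 0 0.

Definition density {R : realType} {n : nat} (A : 'M[R[i]]_n) : Prop :=
  psd A /\ \tr A = 1.

(** T(X,Y) <= e, where T(X,Y) = 1/2 ||X - Y||_1.  For Hermitian X - Y the trace
    norm is the sum of the absolute values of the eigenvalues, i.e. of the real
    diagonal entries of a unitary diagonalisation X - Y = U^* diag(d) U
    (the multiset of eigenvalues is unique, so "there exists" is the same as
    "for all" such decompositions). *)
Definition trdist_le {R : realType} {n : nat} (X Y : 'M[R[i]]_n) (e : R) : Prop :=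
  exists (U : 'M[R[i]]_n) (d : 'rV[R]_n),
    U \is unitarymx /\
    X - Y = adjm U *m diag_mx (map_mx rc d) *m U /\
    (\sum_i `|d 0 i|) / 2 <= e.

Definition eps_ball {R : realType} {n : nat} (Pset : set 'M[R[i]]_n) (e : R)
  : set 'M[R[i]]_n :=
  [set w | density w /\ exists r, Pset r /\ trdist_le w r e].

(** closure of a set of density operators (trace-norm topology; all norms are
    equivalent in finite dimension) *)
Definition dcl {R : realType} {n : nat} (K : set 'M[R[i]]_n) : set 'M[R[i]]_n :=
  [set g | density g /\ forall d : R, 0 < d -> exists k, K k /\ trdist_le g k d].

Definition ket1 {R : realType} : 'M[R[i]]_2 := delta_mx (1 : 'I_2) (1 : 'I_2).

Definition piM {R : realType} (M : R) : 'M[R[i]]_2 :=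
  diag_mx (\row_(i < 2) rc (if i == ord0 then 1 - M^-1 else M^-1)).

(** complete positivity: id_k (x) F maps PSD operators on C^k (x) C^2 to PSD
    operators, for every k.  An operator on C^k (x) C^2 is a k x k block matrix
    with 2 x 2 blocks X i j, and (id_k (x) F) acts blockwise. *)
Definition CP {R : realType} {n : nat} (F : 'M[R[i]]_2 -> 'M[R[i]]_n) : Prop :=
  forall (k : nat) (X : 'I_k -> 'I_k -> 'M[R[i]]_2),
    psd (@mxblock _ k k (fun _ => 2%N) (fun _ => 2%N) X) ->
    psd (@mxblock _ k k (fun _ => n) (fun _ => n) (fun i j => F (X i j))).

Definition CPTP {R : realType} {n : nat} (F : 'M[R[i]]_2 -> 'M[R[i]]_n) : Prop :=
  linear F /\ (forall X, \tr (F X) = \tr X) /\ CP F.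

(** log inf S, with log inf (emptyset) = +oo (natural log; the base is
    immaterial for the equality) *)
Definition log_inf {R : realType} (S : set R) : \bar R :=
  if `[< S !=set0 >] then ((ln (inf S))%:E)%E else (+oo)%E.

Definition work_cost_GPO {R : realType} {n : nat} (Pset Eset : set 'M[R[i]]_n)
  (e : R) : \bar R :=
  log_inf [set M : R | 1 < M /\
    exists F : 'M[R[i]]_2 -> 'M[R[i]]_n, CPTP F /\
      (exists r, Pset r /\ trdist_le (F ket1) r e) /\
      (forall M' : R, M <= M' -> Eset (F (piM M')))].

Definition Dmax_K {R : realType} {n : nat} (K Pset Eset : set 'M[R[i]]_n)
  (e : R) : \bar R :=
  log_inf [set M : R | 1 < M /\
    exists g w, dcl K g /\ eps_ball Pset e w /\
      (forall l : R, 0 < l <= M^-1 -> Eset (rc (1 - l) *: g + rc l *: w))].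

(* Main.v *)
Require Import Defs.
From mathcomp Require Import all_boot all_order all_algebra.
From mathcomp Require Import complex.
From mathcomp Require Import all_classical all_reals all_analysis.
From mathcomp Require Import ring lra.
Import Order.TTheory GRing.Theory Num.Theory.
Local Open Scope ring_scope.
Local Open Scope classical_set_scope.
Local Open Scope sesquilinear_scope.

Set Implicit Arguments.
Unset Strict Implicit.
Section Aux.
Variable R : realType.
Local Notation C := (R[i]).

Lemma adjmE m n (A : 'M[C]_(m, n)) i j : adjm A i j = (A j i)^*.
Proof. by rewrite /adjm !mxE. Qed.

Lemma adjmK m n (A : 'M[C]_(m, n)) : adjm (adjm A) = A.
Proof. by apply/matrixP => i j; rewrite !adjmE conjCK. Qed.

Lemma adjmM m n p (A : 'M[C]_(m, n)) (B : 'M[C]_(n, p)) :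
  adjm (A *m B) = adjm B *m adjm A.
Proof.
apply/matrixP => i j; rewrite adjmE !mxE rmorph_sum /=.
by apply: eq_bigr => k _; rewrite rmorphM /= !adjmE mulrC.
Qed.

Lemma qfE m (u v : 'cV[C]_m) (A : 'M[C]_m) :
  (adjm u *m A *m v) 0 0 = \sum_x \sum_y (u x 0)^* * A x y * v y 0.
Proof.
rewrite !mxE (exchange_big) /=; apply: eq_bigr => x _.
rewrite !mxE mulr_suml; apply: eq_bigr => y _; by rewrite adjmE.
Qed.


Lemma adjm_mxblock k m (B : 'I_k -> 'I_k -> 'M[C]_m) :
  adjm (@mxblock _ k k (fun _ => m) (fun _ => m) B) =
  @mxblock _ k k (fun _ => m) (fun _ => m) (fun i j => adjm (B j i)).
Proof. by apply/matrixP => i j; rewrite !mxE. Qed.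

Lemma adjm_mxcol k m (c : 'I_k -> 'cV[C]_m) :
  adjm (@mxcol _ k (fun _ => m) 1 c) = @mxrow _ k (fun _ => m) 1 (fun i => adjm (c i)).
Proof. by apply/matrixP => i j; rewrite !mxE. Qed.

Lemma qf_block k m (B : 'I_k -> 'I_k -> 'M[C]_m) (c : 'I_k -> 'cV[C]_m) :
  (adjm (@mxcol _ k (fun _ => m) 1 c) *m @mxblock _ k k (fun _ => m) (fun _ => m) B
     *m @mxcol _ k (fun _ => m) 1 c) 0 0
  = \sum_i \sum_j (adjm (c i) *m B i j *m c j) 0 0.
Proof.
rewrite adjm_mxcol mul_mxrow_mxblock mul_mxrow_mxcol summxE exchange_big /=.
apply: eq_bigr => j _; rewrite mulmx_suml summxE; apply: eq_bigr => i _.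
by [].
Qed.

Lemma psd_blockP k m (B : 'I_k -> 'I_k -> 'M[C]_m) :
  psd (@mxblock _ k k (fun _ => m) (fun _ => m) B) <->
  (forall i j, adjm (B i j) = B j i) /\
  (forall c : 'I_k -> 'cV[C]_m, 0 <= \sum_i \sum_j (adjm (c i) *m B i j *m c j) 0 0).
Proof.
split.
- case=> [Hh Hq]; split.
  + move=> i j; move: Hh; rewrite adjm_mxblock => /(congr1 (fun X => submxblock X j i)).
    by rewrite !mxblockK.
  + by move=> c; rewrite -qf_block; apply: Hq.
- case=> [Hh Hq]; split.
  + by rewrite adjm_mxblock; apply: eq_mxblock => i j; rewrite Hh.
  + move=> v; rewrite -(submxcolK v) qf_block; apply: Hq.
Qed.


Lemma psd_block1 m (X : 'M[C]_m) :
  psd X <-> psd (@mxblock _ 1 1 (fun _ => m) (fun _ => m) (fun _ _ => X)).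
Proof.
rewrite psd_blockP; split.
- case=> Hh Hq; split; first by move=> *; rewrite Hh.
  by move=> c; rewrite !big_ord1; apply: Hq.
- case=> Hh Hq; split; first by apply: (Hh 0 0).
  by move=> v; have := Hq (fun _ => v); rewrite !big_ord1.
Qed.

Lemma CP_psd n (F : 'M[C]_2 -> 'M[C]_n) X : CP F -> psd X -> psd (F X).
Proof.
move=> HF /psd_block1 HX; apply/psd_block1; exact: (HF 1%N (fun _ _ => X) HX).
Qed.

Lemma gram_ge0 p (w : 'cV[C]_p) : 0 <= (adjm w *m w) 0 0.
Proof.
rewrite mxE; apply: sumr_ge0 => x _; rewrite adjmE mulrC; exact: mul_conjC_ge0.
Qed.

Lemma psd_gram p m (W : 'M[C]_(p, m)) : psd (adjm W *m W).
Proof.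
split; first by rewrite adjmM adjmK.
by move=> v; rewrite mulmxA -adjmM -mulmxA; apply: gram_ge0.
Qed.

Lemma psd_delta m (a : 'I_m) : psd (delta_mx a a : 'M[C]_m).
Proof.
have -> : (delta_mx a a : 'M[C]_m) = adjm (delta_mx (0 : 'I_1) a) *m delta_mx 0 a.
  have -> : adjm (delta_mx (0 : 'I_1) a) = (delta_mx a 0 : 'M[C]_(m,1)).
    apply/matrixP => i j; rewrite adjmE !mxE conjC_nat.
    by rewrite andbC.
  by rewrite mul_delta_mx.
exact: psd_gram.
Qed.

Lemma CPTP_density n (F : 'M[C]_2 -> 'M[C]_n) X :
  CPTP F -> density X -> density (F X).
Proof.
case=> _ [Htr HCP] [HX Ht]; split; first exact: CP_psd.
by rewrite Htr.
Qed.


Lemma rcE (x : R) : rc x = (x%:C)%C. Proof. by []. Qed.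

Lemma real_rc (z : C) : z \is Num.real -> z = rc (complex.Re z).
Proof.
case: z => a b; rewrite realE !lecE /= /rc.
by case/orP => /andP [/eqP H _]; [rewrite H | rewrite -H].
Qed.

Lemma herm_spectral n (X : 'M[C]_n) : adjm X = X ->
  exists (U : 'M[C]_n) (d : 'rV[R]_n), U \is unitarymx /\
    X = adjm U *m diag_mx (map_mx rc d) *m U.
Proof.
move=> HX.
have Hh : X \is hermsymmx.
  by apply/is_hermitianmxP; rewrite expr0 scale1r; exact: esym HX.
have /orthomx_spectralP HXe := hermitian_normalmx Hh.
have Hr := hermitian_spectral_diag_real Hh.
have E1 : invmx (spectralmx X) = adjm (spectralmx X).
  exact: (invmx_unitary (spectral_unitarymx X)).
exists (spectralmx X), (map_mx (@complex.Re R) (spectral_diag X)).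
split; first exact: spectral_unitarymx.
have Ed : spectral_diag X = map_mx rc (map_mx (@complex.Re R) (spectral_diag X)).
  apply/matrixP => i j; rewrite !mxE.
  by apply: real_rc; apply: (mxOverP Hr).
by rewrite -Ed -E1.
Qed.

Lemma dXd m (a : 'I_m) (A : 'M[C]_m) :
  (delta_mx (0 : 'I_1) a *m A *m delta_mx a (0 : 'I_1)) 0 0 = A a a.
Proof. by rewrite -rowE -colE !mxE. Qed.

Lemma psd_spectral n (g : 'M[C]_n) : psd g ->
  exists (U : 'M[C]_n) (l : 'rV[C]_n), U \is unitarymx /\
    g = adjm U *m diag_mx l *m U /\ forall k, 0 <= l 0 k.
Proof.
case=> Hh Hq; have [U [d [HU Hg]]] := herm_spectral Hh.
exists U, (map_mx rc d); split => //; split => // k.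
have HUU : U *m adjm U = 1%:M by apply/unitarymxP.
have E : U *m g *m adjm U = diag_mx (map_mx rc d).
  by rewrite Hg !mulmxA HUU mul1mx -!mulmxA HUU mulmx1.
have := Hq (adjm U *m delta_mx k 0).
rewrite adjmM adjmK.
have -> : adjm (delta_mx k 0 : 'cV[C]_n) = delta_mx 0 k.
  by apply/matrixP => i j; rewrite adjmE !mxE conjC_nat andbC.
rewrite !mulmxA -(mulmxA _ U) -(mulmxA _ (U *m g)) E dXd mxE eqxx mulr1n.
by [].
Qed.


Lemma adjm_delta p q (i : 'I_p) (j : 'I_q) :
  adjm (delta_mx i j : 'M[C]_(p, q)) = delta_mx j i.
Proof. by apply/matrixP => x y; rewrite adjmE !mxE conjC_nat andbC. Qed.

Lemma adjmZ p q (s : C) (A : 'M[C]_(p, q)) : adjm (s *: A) = s^* *: adjm A.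
Proof. by apply/matrixP => x y; rewrite adjmE [RHS]mxE adjmE mxE rmorphM. Qed.

Lemma key k n (X : 'I_k -> 'I_k -> 'M[C]_2) (g : 'M[C]_n) (a : 'I_2)
  (c : 'I_k -> 'cV[C]_n) :
  psd (@mxblock _ k k (fun _ => 2%N) (fun _ => 2%N) X) -> psd g ->
  0 <= \sum_i \sum_j X i j a a * (adjm (c i) *m g *m c j) 0 0.
Proof.
move=> /psd_blockP [HXh HXq] Hg.
have [U [l [HU [Hge Hl]]]] := psd_spectral Hg.
pose b i := U *m c i.
have E : forall i j, (adjm (c i) *m g *m c j) 0 0
    = \sum_x (b i x 0)^* * l 0 x * b j x 0.
  move=> i j; rewrite Hge.
  have -> : adjm (c i) *m (adjm U *m diag_mx l *m U) *m c j
      = adjm (b i) *m diag_mx l *m b j by rewrite /b adjmM !mulmxA.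
  rewrite mul_mx_diag !mxE; apply: eq_bigr => x _; by rewrite !mxE.
under eq_bigr do under eq_bigr do rewrite E mulr_sumr.
under eq_bigr do rewrite exchange_big /=.
rewrite exchange_big /=.
apply: sumr_ge0 => x _.
have -> : \sum_i \sum_j X i j a a * ((b i x 0)^* * l 0 x * b j x 0)
   = l 0 x * \sum_i \sum_j (adjm (b i x 0 *: delta_mx a (0 : 'I_1)) *m X i j
        *m (b j x 0 *: delta_mx a (0 : 'I_1))) 0 0.
  rewrite mulr_sumr; apply: eq_bigr => i _; rewrite mulr_sumr; apply: eq_bigr => j _.
  have sE : forall (s : C) (M : 'M[C]_1), (s *: M) 0 0 = s * M 0 0.
    by move=> s M; rewrite mxE.
  rewrite adjmZ adjm_delta -!scalemxAl -scalemxAr !sE dXd.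
  ring.
by apply: mulr_ge0; [apply: Hl | apply: HXq].
Qed.


Definition mp n (g w : 'M[C]_n) (X : 'M[C]_2) : 'M[C]_n := X 0 0 *: g + X 1 1 *: w.

Lemma tr2 (X : 'M[C]_2) : \tr X = X 0 0 + X 1 1.
Proof.
rewrite /mxtrace big_ord_recl big_ord1.
by have -> : lift ord0 ord0 = 1 :> 'I_2 by apply: val_inj.
Qed.

Lemma mp_CPTP n (g w : 'M[C]_n) : density g -> density w -> CPTP (mp g w).
Proof.
move=> [[Hgh Hgq] Htg] [[Hwh Hwq] Htw]; split; [|split].
- by move=> s A B; rewrite /mp !mxE !scalerDl -!scalerA scalerDr addrACA.
- by move=> X; rewrite /mp mxtraceD !mxtraceZ Htg Htw !mulr1 tr2.
- move=> k X /psd_blockP [HXh HXq]; apply/psd_blockP; split.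
  + move=> i j; apply/matrixP => x y; rewrite adjmE !mxE.
    have eX : forall a, X j i a a = (X i j a a)^* by move=> a; rewrite -(HXh i j) adjmE.
    have eg : g x y = (g y x)^* by rewrite -{1}Hgh adjmE.
    have ew : w x y = (w y x)^* by rewrite -{1}Hwh adjmE.
    by rewrite !eX eg ew rmorphD !rmorphM.
  + move=> c.
    have sE : forall (s : C) (M : 'M[C]_1), (s *: M) 0 0 = s * M 0 0.
      by move=> s M; rewrite mxE.
    have aE : forall (M N : 'M[C]_1), (M + N) 0 0 = M 0 0 + N 0 0.
      by move=> M N; rewrite mxE.
    under eq_bigr do under eq_bigr do
      rewrite /mp mulmxDr mulmxDl -!scalemxAr -!scalemxAl aE !sE.
    under eq_bigr do rewrite big_split /=.
    rewrite big_split /=; apply: addr_ge0; apply: key => //; apply/psd_blockP; by split.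
Qed.

End Aux.

Section Aux2.
Variable R : realType.
Local Notation C := (R[i]).

Definition ket0 : 'M[C]_2 := delta_mx 0 0.

Lemma ord2P (x : 'I_2) : x = 0 \/ x = 1.
Proof. by case: x => [[|[|//]]] Hx; [left|right]; apply: val_inj. Qed.

Lemma h01 : (0 == 1 :> 'I_2) = false. Proof. by []. Qed.
Lemma h10 : (1 == 0 :> 'I_2) = false. Proof. by []. Qed.
Lemma h00 : (0 == ord0 :> 'I_2) = true. Proof. by []. Qed.
Lemma h1o : (1 == ord0 :> 'I_2) = false. Proof. by []. Qed.

Lemma piM_decomp (M : R) :
  piM M = rc (1 - M^-1) *: ket0 + rc (M^-1) *: ket1.
Proof.
apply/matrixP => x y; rewrite !mxE.
case: (ord2P x) => ->; case: (ord2P y) => ->;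
  rewrite ?eqxx ?h01 ?h10 ?h00 ?h1o ?andbF ?andbT ?andFb ?mulr_natr ?mulrb ?addr0 ?add0r //.
Qed.

Lemma Flin n (F : 'M[C]_2 -> 'M[C]_n) (a b : C) A B : linear F ->
  F (a *: A + b *: B) = a *: F A + b *: F B.
Proof.
move=> HF.
have F0 : F 0 = 0.
  by have := HF (-1) 0 0; rewrite scaler0 addr0 scaleN1r addNr.
have FZ : forall s X, F (s *: X) = s *: F X.
  by move=> s X; have := HF s X 0; rewrite !addr0 F0 addr0.
by rewrite HF FZ.
Qed.

Lemma density_delta (a : 'I_2) : density (delta_mx a a : 'M[C]_2).
Proof.
split; first exact: psd_delta.
rewrite tr2 !mxE; case: (ord2P a) => ->;
  by rewrite ?eqxx ?h01 ?h10 /= ?addr0 ?add0r.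
Qed.

Lemma adjmB p q (A B : 'M[C]_(p, q)) : adjm (A - B) = adjm A - adjm B.
Proof. by apply/matrixP => x y; rewrite !mxE rmorphB. Qed.

Lemma mp_piM n (g w : 'M[C]_n) M : mp g w (piM M) = rc (1 - M^-1) *: g + rc (M^-1) *: w.
Proof. by rewrite /mp !mxE ?eqxx ?h00 ?h1o !mulr1n. Qed.

Lemma mp_ket1 n (g w : 'M[C]_n) : mp g w ket1 = w.
Proof. by rewrite /mp /ket1 !mxE ?eqxx ?h01 ?h10 /= scale0r scale1r add0r. Qed.

End Aux2.

Section Aux3.
Variable R : realType.
Local Notation C := (R[i]).

Lemma rc1B (l : R) : rc (1 - l) = 1 - rc l.
Proof. by apply/eqP; rewrite eq_complex /= oppr0 addr0 !eqxx. Qed.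

Lemma rcM (a b : R) : rc (a * b) = rc a * rc b.
Proof. by apply/eqP; rewrite eq_complex /= !mulr0 !mul0r subr0 addr0 !eqxx. Qed.

Lemma dirB n (Pset Eset : set 'M[C]_n) e (M : R) :
  (1 < M /\ exists g w, dcl Eset g /\ eps_ball Pset e w /\
      (forall l : R, 0 < l <= M^-1 -> Eset (rc (1 - l) *: g + rc l *: w))) ->
  (1 < M /\ exists F : 'M[C]_2 -> 'M[C]_n, CPTP F /\
      (exists r, Pset r /\ trdist_le (F ket1) r e) /\
      (forall M' : R, M <= M' -> Eset (F (piM M')))).
Proof.
case=> HM [g [w [[Hgd _] [[Hwd Hr] Hl]]]]; split => //.
exists (mp g w); split; first exact: mp_CPTP.
split; first by rewrite mp_ket1.
move=> M' HMM'; rewrite mp_piM; apply: Hl.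
have M0 : 0 < M by apply: lt_trans HM.
have M'0 : 0 < M' by apply: lt_le_trans HMM'.
apply/andP; split; first by rewrite invr_gt0.
by rewrite lef_pV2 ?posrE.
Qed.

Lemma dirA n (Pset Eset : set 'M[C]_n) e (M : R) :
  (1 < M /\ exists F : 'M[C]_2 -> 'M[C]_n, CPTP F /\
      (exists r, Pset r /\ trdist_le (F ket1) r e) /\
      (forall M' : R, M <= M' -> Eset (F (piM M')))) ->
  (1 < M /\ exists g w, dcl Eset g /\ eps_ball Pset e w /\
      (forall l : R, 0 < l <= M^-1 -> Eset (rc (1 - l) *: g + rc l *: w))).
Proof.
case=> HM [F [HF [[r [Pr Htr]] HE]]]; split => //.
have M0 : 0 < M by apply: lt_trans HM.
case: (HF) => Hlin _.
pose g := F (ket0 R); pose w := F ket1.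
have Hgd : density g := CPTP_density HF (@density_delta R 0).
have Hwd : density w := CPTP_density HF (@density_delta R 1).
have HFpi : forall M', F (piM M') = rc (1 - M'^-1) *: g + rc (M'^-1) *: w.
  by move=> M'; rewrite piM_decomp Flin.
have HEl : forall l : R, 0 < l <= M^-1 -> Eset (rc (1 - l) *: g + rc l *: w).
  move=> l /andP [l0 lM]; have := HE l^-1; rewrite HFpi invrK; apply.
  by rewrite -lef_pV2 ?posrE ?invr_gt0 // invrK.
exists g, w; split; last first.
  split; last exact: HEl.
  by split => //; exists r.
split => // d Hd.
have Hh : adjm (g - w) = g - w by rewrite adjmB Hgd.1.1 Hwd.1.1.
have [U [dd [HU Hgw]]] := herm_spectral Hh.
pose D := (\sum_i `|dd 0 i|) / 2.
have D0 : 0 <= D by rewrite divr_ge0 // sumr_ge0.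
pose l := Order.min (M^-1) (d / (D + 1)).
have D1 : 0 < D + 1 by lra.
have l0 : 0 < l by rewrite lt_min invr_gt0 M0 divr_gt0.
have lM : l <= M^-1 by rewrite ge_min lexx.
have ld : l <= d / (D + 1) by rewrite ge_min lexx orbT.
exists (rc (1 - l) *: g + rc l *: w); split; first by apply: HEl; rewrite l0 lM.
exists U, (l *: dd); split => //; split.
- have -> : g - (rc (1 - l) *: g + rc l *: w) = rc l *: (g - w).
    rewrite rc1B scalerBl scale1r scalerBr.
    by rewrite opprD opprB addrA [g + _]addrC subrK.
  rewrite Hgw scalemxAl scalemxAr; congr (_ *m _ *m _).
  apply/matrixP => i j; rewrite !mxE rcM mulrnAr.
  by [].
- under eq_bigr do rewrite mxE normrM (ger0_norm (ltW l0)).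
  rewrite -mulr_sumr -mulrA -/D.
  have : l * (D + 1) <= d by rewrite -ler_pdivlMr.
  nra.
Qed.

End Aux3.

Unset Implicit Arguments.
Set Strict Implicit.

Theorem theorem7 (R : realType) (n : nat) (e : R)
  (Pset Eset : set 'M[R[i]]_n) :
  0 <= e < 1 ->
  Pset `<=` density -> Eset `<=` density ->
  work_cost_GPO Pset Eset e = Dmax_K Eset Pset Eset e.
Proof.
move=> _ _ _.
rewrite /work_cost_GPO /Dmax_K; congr log_inf.
apply/seteqP; split => M /=; [exact: dirA | exact: dirB].
Qed.
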